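(* Let $\sigma(x)=1/(1+e^{-x})$, let $k\in\mathbb{N}$ and let $t_\sigma\in\mathbb{R}$ with $\sigma^{(k)}(t_\sigma)\ne0$. Then for every $N\in\mathbb{N}$ with $N>k$ there exist $\alpha_j,\beta_j\in\mathbb{R}$ ($j=0,\dots,N-1$) and a constant $c_{54}\ge0$ such that $$f_{net,x^k}(x)=\frac{k!}{\sigma^{(k)}(t_\sigma)}\sum_{j=0}^{N-1}\alpha_j\,\sigma(\beta_jx+t_\sigma)$$ satisfies, for all $A>0$ and all $x\in[-A,A]$, $|f_{net,x^k}(x)-x^k|\le c_{54}A^N$.
   Context: $\sigma^{(k)}$ denotes the $k$-th derivative of $\sigma$. *)

(* Defs.v *)
From Stdlib Require Import Reals Factorial.
From Coquelicot Require Import Coquelicot.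
Open Scope R_scope.

Definition logistic (x : R) : R := / (1 + exp (- x)).

Definition f_net (k N : nat) (t : R) (alpha beta : nat -> R) (x : R) : R :=
  INR (fact k) / Derive_n logistic k t *
  sum_f_R0 (fun j => alpha j * logistic (beta j * x + t)) (N - 1).

(* Main.v *)
Require Import Defs.
From Stdlib Require Import Reals Factorial Lra Lia.
From Coquelicot Require Import Coquelicot.
Open Scope R_scope.

Lemma logistic_derive x : is_derive logistic x (logistic x * (1 - logistic x)).
Proof.
  unfold logistic.
  assert (H : 0 < exp (- x)) by apply exp_pos.
  auto_derive.
  - lra.
  - field. lra.
Qed.

Lemma logistic_abs x : Rabs (logistic x) <= 1.
Proof.
  unfold logistic. assert (H : 0 < exp (- x)) by apply exp_pos.
  rewrite Rabs_pos_eq.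
  - rewrite <- Rinv_1. apply Rinv_le_contravar; lra.
  - left. apply Rinv_0_lt_compat. lra.
Qed.

Inductive ex := Cst (r : R) | Sig | Add (a b : ex) | Mul (a b : ex).
Fixpoint ev (e : ex) (x : R) : R :=
  match e with Cst r => r | Sig => logistic x | Add a b => ev a x + ev b x
  | Mul a b => ev a x * ev b x end.
Fixpoint dv (e : ex) : ex :=
  match e with Cst _ => Cst 0 | Sig => Mul Sig (Add (Cst 1) (Mul (Cst (-1)) Sig))
  | Add a b => Add (dv a) (dv b) | Mul a b => Add (Mul (dv a) b) (Mul a (dv b)) end.
Fixpoint bd (e : ex) : R :=
  match e with Cst r => Rabs r | Sig => 1 | Add a b => bd a + bd b
  | Mul a b => bd a * bd b end.

Lemma ev_derive e x : is_derive (ev e) x (ev (dv e) x).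
Proof.
  induction e; simpl.
  - exact (is_derive_const r x).
  - replace (logistic x * (1 + -1 * logistic x)) with (logistic x * (1 - logistic x)) by ring.
    apply logistic_derive.
  - apply (is_derive_plus (ev e1) (ev e2)); assumption.
  - apply (is_derive_mult (ev e1) (ev e2)); auto. intros; apply Rmult_comm.
Qed.

Lemma ev_bd e x : Rabs (ev e x) <= bd e.
Proof.
  induction e; simpl.
  - lra.
  - apply logistic_abs.
  - eapply Rle_trans. apply Rabs_triang. lra.
  - rewrite Rabs_mult. apply Rmult_le_compat; auto; apply Rabs_pos.
Qed.

Fixpoint E (m : nat) : ex := match m with O => Sig | S m => dv (E m) end.

Lemma Dn_ev m x : Derive_n logistic m x = ev (E m) x.
Proof.
  revert x; induction m; intros x; simpl. reflexivity.
  rewrite (Derive_ext _ (ev (E m))) by auto.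
  apply is_derive_unique, ev_derive.
Qed.

Lemma exn m x : ex_derive_n logistic m x.
Proof.
  destruct m; simpl. exact I.
  apply (ex_derive_ext (ev (E m))). intros; symmetry; apply Dn_ev.
  eexists; apply ev_derive.
Qed.

Lemma Dn_bd m x : Rabs (Derive_n logistic m x) <= bd (E m).
Proof. rewrite Dn_ev. apply ev_bd. Qed.

Lemma sum_zero_pow (D : nat -> R) n :
  sum_f_R0 (fun m => 0 ^ m / INR (fact m) * D m) n = D O.
Proof.
  induction n. simpl. field.
  rewrite tech5, IHn. replace (0 ^ S n) with 0 by (simpl; ring). unfold Rdiv; ring.
Qed.

Lemma taylor t n y : exists Rm,
  logistic (y + t) = sum_f_R0 (fun m => y ^ m / INR (fact m) * Derive_n logistic m t) n + Rm
  /\ Rabs Rm <= bd (E (S n)) * Rabs y ^ S n / INR (fact (S n)).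
Proof.
  assert (Hf : forall m, 0 < INR (fact m)) by (intro; apply lt_0_INR, lt_O_fact).
  destruct (Rtotal_order y 0) as [Hy|[Hy|Hy]].
  - set (h := fun u => logistic (- u)).
    assert (Hex : forall u m, ex_derive_n h m u).
    { intros u m. apply ex_derive_n_comp_opp. apply filter_forall. intros; apply exn. }
    assert (HD : forall m u, Derive_n h m u = (-1) ^ m * Derive_n logistic m (- u)).
    { intros m u. apply Derive_n_comp_opp. apply filter_forall. intros; apply exn. }
    destruct (Taylor_Lagrange h n (- t) (- (y + t))) as [z [Hz Heq]].
    { lra. }
    { intros; apply Hex. }
    exists ((- (y + t) - - t) ^ S n / INR (fact (S n)) * Derive_n h (S n) z).
    split.
    + unfold h at 1 in Heq. rewrite Ropp_involutive in Heq. rewrite Heq. f_equal.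
      apply sum_eq. intros i _. rewrite HD, Ropp_involutive.
      replace (- (y + t) - - t) with (-1 * y) by ring.
      rewrite Rpow_mult_distr.
      assert (H1 : (-1) ^ i * (-1) ^ i = 1).
      { rewrite <- Rpow_mult_distr. replace (-1 * -1) with 1 by ring. apply pow1. }
      set (Q := y ^ i / INR (fact i) * Derive_n logistic i t).
      replace Q with ((-1) ^ i * (-1) ^ i * Q) by (rewrite H1; ring).
      unfold Q. unfold Rdiv. ring.
    + rewrite HD. replace (- (y + t) - - t) with (-1 * y) by ring.
      rewrite !Rabs_mult, Rabs_div, Rpow_mult_distr, Rabs_mult, <- !RPow_abs.
      2: apply Rgt_not_eq, Hf.
      rewrite Rabs_m1, pow1, (Rabs_pos_eq (INR _)) by (left; apply Hf).
      pose proof (Dn_bd (S n) (- z)). pose proof (Hf (S n)).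
      pose proof (pow_le (Rabs y) (S n) (Rabs_pos y)).
      unfold Rdiv. rewrite !Rmult_1_l.
      replace (bd (E (S n)) * Rabs y ^ S n * / INR (fact (S n))) with
        (Rabs y ^ S n * / INR (fact (S n)) * bd (E (S n))) by ring.
      apply Rmult_le_compat_l; [|lra].
      apply Rmult_le_pos; [lra | left; apply Rinv_0_lt_compat; lra].
  - exists 0. subst y. rewrite sum_zero_pow. split. simpl. rewrite Rplus_0_l, Rplus_0_r; reflexivity.
    rewrite Rabs_R0, pow_i by lia. unfold Rdiv. rewrite Rmult_0_r, Rmult_0_l. lra.
  - destruct (Taylor_Lagrange logistic n t (y + t)) as [z [Hz Heq]].
    { lra. }
    { intros; apply exn. }
    replace (y + t - t) with y in Heq by ring.
    exists (y ^ S n / INR (fact (S n)) * Derive_n logistic (S n) z).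
    split. exact Heq.
    rewrite !Rabs_mult, Rabs_div, <- !RPow_abs.
    2: apply Rgt_not_eq, Hf.
    rewrite (Rabs_pos_eq (INR _)) by (left; apply Hf).
    pose proof (Dn_bd (S n) z). pose proof (Hf (S n)).
    pose proof (pow_le (Rabs y) (S n) (Rabs_pos y)).
    unfold Rdiv.
    replace (bd (E (S n)) * Rabs y ^ S n * / INR (fact (S n))) with
      (Rabs y ^ S n * / INR (fact (S n)) * bd (E (S n))) by ring.
    apply Rmult_le_compat_l; [|lra].
    apply Rmult_le_pos; [lra | left; apply Rinv_0_lt_compat; lra].
Qed.

Fixpoint prodl (r : nat -> R) (n : nat) (z : R) : R :=
  match n with O => 1 | S n => prodl r n z * (z - r n) end.

Lemma poly_coef r n : exists c : nat -> R, (forall j, (n < j)%nat -> c j = 0) /\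
  forall z, prodl r n z = sum_f_R0 (fun j => c j * z ^ j) n.
Proof.
  induction n.
  - exists (fun j => match j with O => 1 | _ => 0 end). split.
    + intros [|j] H; [lia|reflexivity].
    + intros z; simpl; ring.
  - destruct IHn as [c [Hc Hz]].
    exists (fun j => (match j with O => 0 | S i => c i end) - r n * c j). split.
    + intros [|j] H; [lia|]. rewrite !Hc by lia. ring.
    + intros z. simpl prodl. rewrite Hz.
      rewrite (sum_eq (fun j => ((match j with O => 0 | S i => c i end) - r n * c j) * z ^ j) (fun j => (match j with O => 0 | S i => c i end) * z ^ j + (- r n) * (c j * z ^ j))).
      2: { intros; ring. }
      rewrite plus_sum. rewrite (decomp_sum (fun j => (match j with O => 0 | S i => c i end) * z ^ j) (S n)) by lia.
      rewrite tech5, (Hc (S n)) by lia.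
      simpl pred.
      rewrite (sum_eq (fun i => - r n * (c i * z ^ i)) (fun i => c i * z ^ i * - r n)) by (intros; ring).
      rewrite <- scal_sum.
      rewrite (sum_eq (fun i => c i * z ^ S i) (fun i => c i * z ^ i * z)) by (intros; simpl; ring).
      rewrite <- scal_sum. ring.
Qed.

Lemma prodl_zero r n z i : (i < n)%nat -> z = r i -> prodl r n z = 0.
Proof.
  induction n; intros H Hz. lia.
  simpl. destruct (Nat.eq_dec i n). subst i. rewrite Hz. ring.
  rewrite IHn; [ring|lia|exact Hz].
Qed.

Lemma prodl_nz r n z : (forall i, (i < n)%nat -> z <> r i) -> prodl r n z <> 0.
Proof.
  induction n; intros H; simpl. lra.
  apply Rmult_integral_contrapositive_currified.
  apply IHn; intros; apply H; lia.
  intro E0. apply (H n). lia. lra.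
Qed.

Lemma sum_swap (f : nat -> nat -> R) n m :
  sum_f_R0 (fun i => sum_f_R0 (fun j => f i j) m) n =
  sum_f_R0 (fun j => sum_f_R0 (fun i => f i j) n) m.
Proof.
  induction n. reflexivity.
  rewrite tech5, IHn, <- plus_sum. apply sum_eq. intros; reflexivity.
Qed.

Lemma sum_delta (c : nat -> R) n k : (k <= n)%nat ->
  sum_f_R0 (fun m => c m * (if Nat.eqb m k then 1 else 0)) n = c k.
Proof.
  induction n; intros H.
  - simpl. assert (k = 0%nat) by lia. subst. simpl. ring.
  - rewrite tech5. destruct (Nat.eq_dec k (S n)).
    + subst. rewrite Nat.eqb_refl.
      rewrite (sum_eq _ (fun _ => 0)). 2: { intros i Hi. replace (Nat.eqb i (S n)) with false. ring.
        symmetry; apply Nat.eqb_neq; lia. }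
      clear. rewrite sum_cte. ring.
    + rewrite IHn by lia. replace (Nat.eqb (S n) k) with false. ring.
      symmetry; apply Nat.eqb_neq; lia.
Qed.

Lemma moments n k : (k <= n)%nat -> exists alpha : nat -> R,
  forall m, (m <= n)%nat ->
  sum_f_R0 (fun j => alpha j * (2 ^ j) ^ m) n = if Nat.eqb m k then 1 else 0.
Proof.
  intros Hk.
  set (r := fun i => 2 ^ (if Nat.ltb i k then i else S i)).
  destruct (poly_coef r n) as [c [_ Hc]].
  assert (Hnz : prodl r n (2 ^ k) <> 0).
  { apply prodl_nz. intros i Hi. unfold r.
    destruct (Nat.ltb_spec i k).
    - apply Rgt_not_eq. apply Rlt_pow; [lra|lia].
    - apply Rlt_not_eq. apply Rlt_pow; [lra|lia]. }
  exists (fun j => c j / prodl r n (2 ^ k)). intros m Hm.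
  rewrite (sum_eq _ (fun j => c j * (2 ^ m) ^ j * / prodl r n (2 ^ k))).
  2: { intros j _. rewrite <- !pow_mult, Nat.mul_comm. unfold Rdiv. ring. }
  rewrite <- scal_sum, <- Hc.
  destruct (Nat.eqb_spec m k).
  - subst. field. exact Hnz.
  - rewrite (prodl_zero r n (2 ^ m) (if Nat.ltb m k then m else pred m)). ring.
    destruct (Nat.ltb_spec m k); lia.
    unfold r. destruct (Nat.ltb_spec m k).
    + destruct (Nat.ltb_spec m k); [reflexivity| lia].
    + destruct (Nat.ltb_spec (pred m) k). lia. f_equal. lia.
Qed.

Lemma taylor' t n y :
  Rabs (logistic (y + t) - sum_f_R0 (fun m => y ^ m / INR (fact m) * Derive_n logistic m t) n)
  <= bd (E (S n)) * Rabs y ^ S n / INR (fact (S n)).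
Proof.
  destruct (taylor t n y) as [Rm [H1 H2]]. rewrite H1.
  replace (_ + Rm - _) with Rm by ring. exact H2.
Qed.

Theorem lemma9 (k : nat) (t : R) (Hk : Derive_n logistic k t <> 0)
  (N : nat) (HN : (k < N)%nat) :
  exists (alpha beta : nat -> R) (c54 : R), 0 <= c54 /\
    forall A x : R, 0 < A -> -A <= x <= A ->
      Rabs (f_net k N t alpha beta x - x ^ k) <= c54 * A ^ N.
Proof.
  destruct N as [|n]; [lia|].
  destruct (moments n k) as [alpha Hal]; [lia|].
  set (D := fun m => Derive_n logistic m t).
  set (K := INR (fact k) / D k).
  set (M := bd (E (S n))).
  assert (HM : 0 <= M) by (eapply Rle_trans; [apply Rabs_pos | apply (ev_bd _ 0)]).
  assert (Hf : forall m, 0 < INR (fact m)) by (intro; apply lt_0_INR, lt_O_fact).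
  exists alpha, (fun j => 2 ^ j),
    (Rabs K * sum_f_R0 (fun j => Rabs (alpha j) * (M * (2 ^ j) ^ S n / INR (fact (S n)))) n).
  split.
  { apply Rmult_le_pos. apply Rabs_pos. apply cond_pos_sum. intros j.
    apply Rmult_le_pos. apply Rabs_pos. apply Rmult_le_pos.
    apply Rmult_le_pos. exact HM. apply pow_le, pow_le; lra.
    left; apply Rinv_0_lt_compat, Hf. }
  intros A x HA Hx.
  unfold f_net. replace (S n - 1)%nat with n by lia.
  set (T := fun y => sum_f_R0 (fun m => y ^ m / INR (fact m) * D m) n).
  set (Rm := fun j => logistic (2 ^ j * x + t) - T (2 ^ j * x)).
  rewrite (sum_eq _ (fun j => alpha j * T (2 ^ j * x) + alpha j * Rm j)).
  2: { intros j _. unfold Rm. ring. }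
  rewrite plus_sum.
  assert (HT : sum_f_R0 (fun j => alpha j * T (2 ^ j * x)) n = x ^ k / INR (fact k) * D k).
  { unfold T.
    rewrite (sum_eq _ (fun j => sum_f_R0 (fun m => alpha j * (2 ^ j) ^ m * (x ^ m / INR (fact m) * D m)) n)).
    2: { intros j _. rewrite scal_sum. apply sum_eq. intros m _. rewrite Rpow_mult_distr. unfold Rdiv. ring. }
    rewrite sum_swap.
    rewrite (sum_eq _ (fun m => (x ^ m / INR (fact m) * D m) * (if Nat.eqb m k then 1 else 0))).
    2: { intros m Hm. rewrite <- Hal by exact Hm. rewrite scal_sum. apply sum_eq. intros; ring. }
    apply sum_delta. lia. }
  rewrite HT. change (INR (fact k) / Derive_n logistic k t) with K.
  replace (K * (x ^ k / INR (fact k) * D k + sum_f_R0 (fun j => alpha j * Rm j) n) - x ^ k)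
    with (K * sum_f_R0 (fun j => alpha j * Rm j) n).
  2: { unfold K. field. split; [apply Rgt_not_eq, Hf | exact Hk]. }
  idtac.
  rewrite Rabs_mult, Rmult_assoc. apply Rmult_le_compat_l. apply Rabs_pos.
  eapply Rle_trans. apply sum_f_R0_triangle.
  rewrite Rmult_comm, scal_sum. cbv beta. apply sum_Rle. intros j _.
  rewrite Rabs_mult, Rmult_assoc. apply Rmult_le_compat_l. apply Rabs_pos.
  eapply Rle_trans. unfold Rm. apply taylor'. fold M.
  rewrite Rabs_mult, <- RPow_abs, (Rabs_pos_eq 2) by lra.
  rewrite Rpow_mult_distr.
  assert (Hx' : Rabs x ^ S n <= A ^ S n).
  { apply pow_incr. split. apply Rabs_pos. apply Rabs_le. lra. }
  pose proof (pow_le (2 ^ j) (S n) (pow_le 2 j ltac:(lra))).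
  pose proof (Rinv_0_lt_compat _ (Hf (S n))).
  unfold Rdiv.
  replace (M * (2 ^ j) ^ S n * / INR (fact (S n)) * A ^ S n) with
    ((M * (2 ^ j) ^ S n * / INR (fact (S n))) * A ^ S n) by ring.
  replace (M * ((2 ^ j) ^ S n * Rabs x ^ S n) * / INR (fact (S n))) with
    ((M * (2 ^ j) ^ S n * / INR (fact (S n))) * Rabs x ^ S n) by ring.
  apply Rmult_le_compat_l; [|exact Hx'].
  apply Rmult_le_pos; [apply Rmult_le_pos|]; lra.
Qed.
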